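(* Let $e$ be a finite set with $|e|\ge 2$, $\gamma_e:e\to\mathbb{R}_{+}$, $\gamma_e(\mathcal{S})=\sum_{v\in\mathcal{S}}\gamma_e(v)$, and let $g_e:[0,\gamma_e(e)]\to\mathbb{R}_{\ge0}$ be concave with $g_e(0)=g_e(\gamma_e(e))=0$. Let $w_e(\mathcal{S})=g_e(\gamma_e(\mathcal{S}))$ for $\mathcal{S}\subseteq e$. Define $\mathcal{Q}_a=\{\gamma_e(\mathcal{S}):\emptyset\ne\mathcal{S}\subsetneq e\}$ and $\mathcal{Q}_s=\{\gamma_e(\mathcal{S}):\mathcal{S}\subseteq e,\ 0<\gamma_e(\mathcal{S})\le\gamma_e(e)/2\}$. Then: (i) $w_e$ is graph reducible. More precisely, with $r=|\mathcal{Q}_a|$ and $b_1<\dots<b_r$ the elements of $\mathcal{Q}_a$, there exist nonnegative coefficients $a_1,\dots,a_r$ such that for all $\mathcal{S}\subseteq e$, $$w_e(\mathcal{S})=\sum_{i=1}^r a_i\min\{(\gamma_e(e)-b_i)\gamma_e(\mathcal{S}),\ b_i\gamma_e(e\setminus\mathcal{S})\},$$ so that $w_e$ is the gadget splitting function of the graph obtained as the union, over $i=1,\dots,r$, of asymmetric EDVWs-based gadgets with parameters $(a,b)=(a_i(\gamma_e(e)-b_i),\ a_ib_i)$, each with its own auxiliary vertex and all sharing the vertex set $e$ (edges of coefficient zero may be dropped). In particular $w_e$ is the gadget splitting function of a combination of at most $|\mathcal{Q}_a|$ asymmetric EDVWs-based gadgets. (ii) If in addition $g_e$ is symmetric, i.e.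 $g_e(x)=g_e(\gamma_e(e)-x)$ for all $x$, then with $r=|\mathcal{Q}_s|$ and $b_1<\dots<b_r$ the elements of $\mathcal{Q}_s$, there exist nonnegative coefficients $a_1,\dots,a_r$ such that for all $\mathcal{S}\subseteq e$, $$w_e(\mathcal{S})=\sum_{i=1}^r a_i\min\{\gamma_e(\mathcal{S}),\ \gamma_e(e\setminus\mathcal{S}),\ b_i\},$$ so that $w_e$ is the gadget splitting function of the union over $i$ of symmetric EDVWs-based gadgets with parameter $b=b_i$ and all edge weights multiplied by $a_i$, each with its own pair of auxiliary vertices and all sharing the vertex set $e$; i.e. a combination of at most $|\mathcal{Q}_s|$ symmetric EDVWs-based gadgets.
   Context: For a weighted, possibly directed graph $\mathcal{G}$ with vertex set $\mathcal{V}$ and weights $W_{uv}$ (weight of edge from $u$ to $v$), $\mathrm{cut}_{\mathcal{G}}(\mathcal{T})=\sum_{u\in\mathcal{T},v\in\mathcal{V}\setminus\mathcal{T}}W_{uv}$. A gadget for a hyperedge $e$ is a weighted, possibly directed graph $\mathcal{G}_e$ with vertex set $\mathcal{V}'=e\cup\hat{\mathcal{V}}$, $\hat{\mathcal{V}}$ a set of auxiliary vertices disjoint from $e$; its gadget splitting function is $\hat w_e(\mathcal{S})=\min_{\mathcal{T}\subseteq\mathcal{V}',\,\mathcal{T}\cap e=\mathcal{S}}\mathrm{cut}_{\mathcal{G}_e}(\mathcal{T})$. A splitting function is graph reducible if it equals some gadget splitting function. The symmetric EDVWs-based gadget with parameter $b>0$ is the directed graph on $e\cup\{e',e''\}$ with,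 for each $v\in e$, an edge $v\to e'$ of weight $\gamma_e(v)$ and an edge $e''\to v$ of weight $\gamma_e(v)$, plus an edge $e'\to e''$ of weight $b$; its gadget splitting function is $\min\{\gamma_e(\mathcal{S}),\gamma_e(e\setminus\mathcal{S}),b\}$. The asymmetric EDVWs-based gadget with parameters $a,b\ge0$ is the directed graph on $e\cup\{v_e\}$ with, for each $v\in e$, an edge $v\to v_e$ of weight $a\gamma_e(v)$ and an edge $v_e\to v$ of weight $b\gamma_e(v)$; its gadget splitting function is $\min\{a\gamma_e(\mathcal{S}),b\gamma_e(e\setminus\mathcal{S})\}$. *)

(* Defs.v *)
From HB Require Import structures.
From mathcomp Require Import all_boot all_order all_algebra.
Set Implicit Arguments. Unset Strict Implicit. Unset Printing Implicit Defensive.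
Import Order.TTheory GRing.Theory Num.Theory.
Local Open Scope ring_scope.

Section Defs.
Variable R : realFieldType.

Definition cut (V : finType) (W : V -> V -> R) (T : {set V}) : R :=
  \sum_(u in T) \sum_(v in ~: T) W u v.

(** f is the gadget splitting function of the gadget (V, W), where the
    hyperedge e is embedded in V by emb (auxiliary vertices = the rest):
    f S = min { cut T | T ∩ e = S }. *)
Definition is_gadget_split (e V : finType) (emb : e -> V) (W : V -> V -> R)
    (f : {set e} -> R) : Prop :=
  forall S : {set e},
    (exists T : {set V}, [set x | emb x \in T] = S /\ cut W T = f S) /\
    (forall T : {set V}, [set x | emb x \in T] = S -> f S <= cut W T).

Definition graph_reducible (e : finType) (f : {set e} -> R) : Prop :=
  exists (V : finType) (emb : e -> V) (W : V -> V -> R),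
    injective emb /\ (forall u v, 0 <= W u v) /\ is_gadget_split emb W f.

Definition gammaS (e : finType) (gamma : e -> R) (S : {set e}) : R :=
  \sum_(v in S) gamma v.

Definition Qa (e : finType) (gamma : e -> R) : seq R :=
  undup [seq gammaS gamma A | A <- enum [set: {set e}] &
                               (A != set0) && (A != setT)].

Definition Qs (e : finType) (gamma : e -> R) : seq R :=
  undup [seq gammaS gamma A | A <- enum [set: {set e}] &
           (0 < gammaS gamma A) && (gammaS gamma A <= gammaS gamma setT / 2%:R)].

(** Union of asymmetric EDVWs-based gadgets, the i-th with parameters
    (p_i.1, p_i.2) = (a, b) and its own auxiliary vertex inr i:
    edges v -> v_i of weight a*gamma v and v_i -> v of weight b*gamma v. *)
Definition asym_union_W (e : finType) (gamma : e -> R) (p : seq (R * R))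
    (x y : e + 'I_(size p)) : R :=
  match x, y with
  | inl u, inr i => (nth (0, 0) p i).1 * gamma u
  | inr i, inl u => (nth (0, 0) p i).2 * gamma u
  | _, _ => 0
  end.

(** Union of symmetric EDVWs-based gadgets, the i-th with parameter b = p_i.2
    and all edge weights multiplied by a = p_i.1, with its own auxiliary pair
    e'_i = inr (i, false), e''_i = inr (i, true):
    v -> e'_i and e''_i -> v of weight a*gamma v, e'_i -> e''_i of weight a*b. *)
Definition sym_union_W (e : finType) (gamma : e -> R) (p : seq (R * R))
    (x y : e + ('I_(size p) * bool)) : R :=
  match x, y with
  | inl u, inr (i, false) => (nth (0, 0) p i).1 * gamma u
  | inr (i, true), inl u => (nth (0, 0) p i).1 * gamma u
  | inr (i, false), inr (j, true) =>
      if i == j then (nth (0, 0) p i).1 * (nth (0, 0) p i).2 else 0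
  | _, _ => 0
  end.

Definition concave_on (lo hi : R) (g : R -> R) : Prop :=
  forall x y t, lo <= x <= hi -> lo <= y <= hi -> 0 <= t <= 1 ->
    t * g x + (1 - t) * g y <= g (t * x + (1 - t) * y).

End Defs.

Arguments asym_union_W {R e} gamma p x y.
Arguments sym_union_W {R e} gamma p x y.

(* Main.v *)
Require Import Defs.
From HB Require Import structures.
From mathcomp Require Import all_boot all_order all_algebra.
From mathcomp Require Import ring lra.
Set Implicit Arguments. Unset Strict Implicit. Unset Printing Implicit Defensive.
Import Order.TTheory GRing.Theory Num.Theory.
Local Open Scope ring_scope.


Section Interp.
Variable R : realFieldType.
Variables (y sig : R -> R).

Definition slope (u v : R) := (y v - y u) / (v - u).
Definition nexts (b : R) (l : seq R) :=
  if l is c :: _ then slope b c else sig b.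

Fixpoint mkA (p : R) (l : seq R) : R -> R :=
  match l with
  | [::] => fun _ => 0
  | b :: l' => fun q => if q == b then slope p b - nexts b l' else mkA b l' q
  end.

Lemma mkA_tail p b l q : path <%R p (b :: l) -> q \in l -> mkA p (b :: l) q = mkA b l q.
Proof.
move=> /= /andP[_ Hp] ql.
have := order_path_min lt_trans Hp => /allP /(_ q ql) bq.
by rewrite /= (gt_eqF bq).
Qed.

Lemma sumA p l : path <%R p l ->
  \sum_(q <- l) mkA p l q = nexts p l - sig (last p l).
Proof.
elim: l p => [|b l IH] p Hp /=; first by rewrite big_nil subrr.
rewrite big_cons eqxx.
rewrite (eq_big_seq (mkA b l)); last by move=> q ql; exact: (mkA_tail Hp ql).
case/andP: Hp => _ Hp; rewrite IH //; ring.
Qed.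

Lemma interp p l : path <%R p l -> forall x, x \in p :: l ->
  \sum_(q <- l) mkA p l q * (Num.min x q - p) = y x - y p - (x - p) * sig (last p l).
Proof.
elim: l p => [|b l IH] p Hp x.
  by rewrite inE => /eqP ->; rewrite big_nil subrr; ring.
rewrite inE => /orP[/eqP ->|xl].
  rewrite big1_seq ?subrr; first ring.
  move=> q /andP[_ ql].
  have := order_path_min lt_trans Hp => /allP /(_ q ql) pq.
  by rewrite min_l ?subrr ?mulr0 // ltW.
have Hp' := Hp; move: Hp' => /= /andP[pb Hb].
have bx : b <= x.
  move: xl; rewrite inE => /orP[/eqP ->//|xl].
  by have := order_path_min lt_trans Hb => /allP /(_ x xl) /ltW.
rewrite big_cons eqxx (min_r bx).
rewrite (eq_big_seq (fun q => mkA b l q * (Num.min x q - b) + mkA b l q * (b - p)));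
  last first.
  move=> q ql; rewrite -mulrDr.
  have -> : Num.min x q - b + (b - p) = Num.min x q - p by ring.
  congr (_ * _); exact: mkA_tail Hp ql.
rewrite big_split /= -mulr_suml IH // sumA //=.
rewrite /slope.
have : b - p != 0 by rewrite subr_eq0 gt_eqF.
by move=> nz; field.
Qed.

Lemma mkA_ge0 (D : pred R) p l : path <%R p l -> all D (p :: l) ->
  (forall u v w, D u -> D v -> D w -> u < v -> v < w -> slope v w <= slope u v) ->
  (forall u v, D u -> D v -> u < v -> sig v <= slope u v) ->
  forall q, q \in l -> 0 <= mkA p l q.
Proof.
move=> + + H3 Hs; elim: l p => [|b l IH] p //= /andP[pb Hb] /and3P[Dp Db Dl] q.
rewrite inE; case: eqP => [-> _|_ /= ql]; last by apply: IH => //=; rewrite Db.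
rewrite subr_ge0; case: l Hb Dl {IH} => [|c l] /=; first by move=> _ _; exact: Hs.
by case/andP=> bc _ /andP[Dc _]; apply: H3.
Qed.
End Interp.

Lemma conc_slope (R : realFieldType) (lo hi : R) g u v w :
  concave_on lo hi g -> lo <= u -> u < v -> v < w -> w <= hi ->
  slope g v w <= slope g u v.
Proof.
move=> Hc lu uv vw wh.
have uw : u < w by apply: lt_trans vw.
set t := (w - v) / (w - u).
have wu0 : 0 < w - u by rewrite subr_gt0.
have wu0' : w - u != 0 by rewrite gt_eqF.
have t0 : 0 <= t by rewrite divr_ge0 // subr_ge0 ltW.
have t1 : t <= 1 by rewrite ler_pdivrMr // mul1r; lra.
have Hv : t * u + (1 - t) * w = v by rewrite /t; field.
have := Hc u w t; rewrite Hv => /(_ _ _ _) H.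
have {}H : t * g u + (1 - t) * g w <= g v.
  apply: H; first by rewrite lu (le_trans (ltW uw)).
    by rewrite wh (le_trans lu) // ltW.
  by rewrite t0 t1.
have key : g u * (w - v) + g w * (v - u) <= g v * (w - u).
  have -> : g u * (w - v) + g w * (v - u) = (t * g u + (1 - t) * g w) * (w - u).
    by rewrite /t; field.
  by rewrite ler_pM2r.
have vu : 0 < v - u by rewrite subr_gt0.
have wv : 0 < w - v by rewrite subr_gt0.
rewrite /slope ler_pdivrMr // mulrAC ler_pdivlMr //.
nra.
Qed.

Section Cuts.
Variables (R : realFieldType) (e : finType) (gamma : e -> R).

Lemma gammaSC S : gammaS gamma (~: S) = gammaS gamma setT - gammaS gamma S.
Proof. by rewrite /gammaS [in RHS](big_setID S) /= setTI setTD; ring. Qed.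

Lemma gammaS_mk S : gammaS gamma S = \sum_x (if x \in S then gamma x else 0).
Proof. by rewrite /gammaS big_mkcond. Qed.

Variable p : seq (R * R).

Lemma cut_asym (T : {set e + 'I_(size p)}) :
  cut (asym_union_W gamma p) T =
  \sum_(i < size p) (if inr i \in T
     then (nth (0, 0) p i).2 * gammaS gamma (~: [set x | inl x \in T])
     else (nth (0, 0) p i).1 * gammaS gamma [set x | inl x \in T]).
Proof.
rewrite /cut big_mkcond big_sumType /=.
have E1 : forall x, (if inl x \in T then \sum_(v in ~: T) asym_union_W gamma p (inl x) v else 0)
   = \sum_(i < size p) (if inr i \in T then 0 else
        (if x \in [set x | inl x \in T] then (nth (0,0) p i).1 * gamma x else 0)).
  move=> x; rewrite inE; case: (inl x \in T).
    rewrite big_mkcond big_sumType /= big1 ?add0r; last by move=> y; case: ifP.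
    by apply: eq_bigr => i _; rewrite inE; case: (inr i \in T).
  by rewrite big1 // => i _; case: ifP.
have E2 : forall i, (if inr i \in T then \sum_(v in ~: T) asym_union_W gamma p (inr i) v else 0)
   = if inr i \in T then (nth (0, 0) p i).2 * gammaS gamma (~: [set x | inl x \in T]) else 0.
  move=> i; case: ifP => // _.
  rewrite big_mkcond big_sumType /= [X in _ + X]big1 ?addr0; last by move=> j; case: ifP.
  rewrite gammaS_mk big_distrr /=; apply: eq_bigr => y _; rewrite !inE.
  by case: ifP; rewrite ?mulr0.
rewrite (eq_bigr _ (fun x _ => E1 x)) exchange_big /= (eq_bigr _ (fun i _ => E2 i)).
rewrite -big_split /=; apply: eq_bigr => i _.
case: ifP => _; first by rewrite big1 ?add0r // => x _; case: ifP.
by rewrite addr0 gammaS_mk big_distrr /=; apply: eq_bigr => x _; case: ifP; rewrite ?mulr0.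
Qed.

Lemma cut_sym (T : {set e + ('I_(size p) * bool)}) :
  cut (sym_union_W gamma p) T =
  \sum_(i < size p)
     ((if inr (i, false) \in T then 0
         else (nth (0, 0) p i).1 * gammaS gamma [set x | inl x \in T])
    + (if inr (i, true) \in T
         then (nth (0, 0) p i).1 * gammaS gamma (~: [set x | inl x \in T]) else 0)
    + (if (inr (i, false) \in T) && (inr (i, true) \notin T)
         then (nth (0, 0) p i).1 * (nth (0, 0) p i).2 else 0)).
Proof.
set S := [set x | inl x \in T].
have pairE : forall F : 'I_(size p) * bool -> R,
    \sum_z F z = \sum_i (F (i, true) + F (i, false)).
  move=> F.
  have -> : \sum_i (F (i, true) + F (i, false)) = \sum_i \sum_b F (i, b).
    by apply: eq_bigr => i _; rewrite big_bool.
  by rewrite pair_big; apply: eq_bigr => -[].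
rewrite /cut big_mkcond big_sumType /= pairE.
have E1 : forall x, (if inl x \in T then \sum_(v in ~: T) sym_union_W gamma p (inl x) v else 0)
   = \sum_(i < size p) (if inr (i, false) \in T then 0 else
        (if x \in S then (nth (0,0) p i).1 * gamma x else 0)).
  move=> x; rewrite inE; case: (inl x \in T).
    rewrite big_mkcond big_sumType /= big1 ?add0r; last by move=> y; case: ifP.
    rewrite pairE; apply: eq_bigr => i _; rewrite !inE.
    by case: (inr (i, true) \in T); case: (inr (i, false) \in T); rewrite /= ?add0r ?addr0.
  by rewrite big1 // => i _; case: ifP.
rewrite (eq_bigr _ (fun x _ => E1 x)) exchange_big /= -big_split /=.
apply: eq_bigr => i _.
rewrite !big_mkcond !big_sumType /=.
rewrite !big1_eq !addr0 !add0r.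
have -> : \sum_(i0 | inl i0 \in ~: T) (nth (0, 0) p i).1 * gamma i0 =
   (nth (0, 0) p i).1 * gammaS gamma (~: S).
  by rewrite /gammaS big_distrr; apply: eq_bigl => x; rewrite !inE.
rewrite [X in _ + (_ + X)](_ : _ = if (inr (i, false) \in T) && (inr (i, true) \notin T) then
   (nth (0, 0) p i).1 * (nth (0, 0) p i).2 else 0); last first.
  case: ifP => //= HiT.
  rewrite big_mkcond pairE (bigD1 i) //= big1 ?addr0; last first.
    by move=> j /negbTE ji; rewrite eq_sym ji; case: ifP => _; case: ifP => _; rewrite ?addr0.
  by rewrite eqxx !inE; case: ifP => _; case: ifP => _; rewrite addr0.
rewrite addrA; congr (_ + _ + _).
case: ifP => _; first by rewrite big1 // => x _.
rewrite gammaS_mk big_distrr /=.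
by apply: eq_bigr => x _; case: ifP; rewrite ?mulr0.
Qed.
End Cuts.

Section Gad.
Variables (R : realFieldType) (e : finType) (gamma : e -> R).

Lemma asym_gadget p (f : {set e} -> R) :
  (forall S, f S = \sum_(x <- p) Num.min (x.1 * gammaS gamma S) (x.2 * gammaS gamma (~: S))) ->
  is_gadget_split (@inl e _) (asym_union_W gamma p) f.
Proof.
move=> Hf S; split.
  exists [set z : e + 'I_(size p) | match z with inl x => x \in S
     | inr i => (nth (0,0) p i).2 * gammaS gamma (~: S) <= (nth (0,0) p i).1 * gammaS gamma S end].
  have HS : [set x | inl x \in [set z : e + 'I_(size p) | match z with inl x => x \in S
     | inr i => (nth (0,0) p i).2 * gammaS gamma (~: S) <= (nth (0,0) p i).1 * gammaS gamma S end]] = S.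
    by apply/setP => x; rewrite !inE.
  split => //; rewrite cut_asym HS Hf (big_nth (0,0)) big_mkord.
  by apply: eq_bigr => i _; rewrite inE; case: leP.
move=> T HS; rewrite cut_asym HS Hf (big_nth (0,0)) big_mkord.
by apply: ler_sum => i _; case: ifP => _; rewrite ge_min lexx ?orbT.
Qed.

Lemma sym_gadget p (f : {set e} -> R) :
  (forall x, x \in p -> 0 <= x.1) -> (forall v, 0 <= gamma v) ->
  (forall S, f S = \sum_(x <- p)
     Num.min (Num.min (x.1 * gammaS gamma S) (x.1 * gammaS gamma (~: S))) (x.1 * x.2)) ->
  is_gadget_split (@inl e _) (sym_union_W gamma p) f.
Proof.
move=> Hp Hg Hf S.
have Hgs : forall A, 0 <= gammaS gamma A by move=> A; apply: sumr_ge0.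
have Hn : forall i : 'I_(size p), 0 <= (nth (0,0) p i).1.
  by move=> i; apply: Hp; rewrite mem_nth.
pose m1 (i : 'I_(size p)) := (nth (0,0) p i).1 * gammaS gamma S.
pose m2 (i : 'I_(size p)) := (nth (0,0) p i).1 * gammaS gamma (~: S).
pose m3 (i : 'I_(size p)) := (nth (0,0) p i).1 * (nth (0,0) p i).2.
have m2ge : forall i, 0 <= m2 i by move=> i; apply: mulr_ge0; [exact: Hn|exact: Hgs].
have m1ge : forall i, 0 <= m1 i by move=> i; apply: mulr_ge0; [exact: Hn|exact: Hgs].
split.
  pose c1 i := (m1 i <= m2 i) && (m1 i <= m3 i).
  pose c2 i := m2 i <= m3 i.
  exists [set z : e + ('I_(size p) * bool) | match z with inl x => x \in S
     | inr (i, b) => ~~ c1 i && (b ==> c2 i) end].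
  have HS : [set x | inl x \in [set z : e + ('I_(size p) * bool) | match z with inl x => x \in S
     | inr (i, b) => ~~ c1 i && (b ==> c2 i) end]] = S.
    by apply/setP => x; rewrite !inE.
  split => //; rewrite cut_sym HS Hf (big_nth (0,0)) big_mkord.
  apply: eq_bigr => i _; rewrite !inE /= andbT -/(m1 i) -/(m2 i) -/(m3 i).
  rewrite /c1 /c2 !minEle.
  case: (leP (m1 i) (m2 i)) => h12 /=; case: (leP (m1 i) (m3 i)) => h13 /=;
    case: (leP (m2 i) (m3 i)) => h23 /=; lra.
move=> T HS; rewrite cut_sym HS Hf (big_nth (0,0)) big_mkord.
apply: ler_sum => i _; rewrite -/(m1 i) -/(m2 i) -/(m3 i).
have a1 : Num.min (Num.min (m1 i) (m2 i)) (m3 i) <= m1 i by rewrite !ge_min lexx.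
have a2 : Num.min (Num.min (m1 i) (m2 i)) (m3 i) <= m2 i by rewrite !ge_min lexx !orbT.
have a3 : Num.min (Num.min (m1 i) (m2 i)) (m3 i) <= m3 i by rewrite !ge_min lexx !orbT.
have := m2ge i; have := m1ge i.
by case: (inr (i, false) \in T); case: (inr (i, true) \in T) => /=; lra.
Qed.
End Gad.

Lemma path_le_last (R : realFieldType) (p : R) l q :
  path <%R p l -> q \in p :: l -> q <= last p l.
Proof.
elim: l p q => [|b l IH] p q /=; first by rewrite inE => _ /eqP ->.
case/andP=> pb Hb; rewrite inE => /orP[/eqP ->|ql]; last exact: IH.
apply: (le_trans (ltW pb)); apply: IH => //; by rewrite inE eqxx.
Qed.

Lemma sorted_path0 (R : realFieldType) (p : R) l :
  sorted <%R l -> (forall q, q \in l -> p < q) -> path <%R p l.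
Proof.
move=> Hs Hq; rewrite path_sortedE; last exact: lt_trans.
by rewrite Hs andbT; apply/allP.
Qed.

Unset Implicit Arguments.
Theorem theorem3 (R : realFieldType) (e : finType) (gamma : e -> R) (g : R -> R) :
  (1 < #|e|)%N ->
  (forall v, 0 < gamma v) ->
  concave_on 0 (gammaS gamma setT) g ->
  (forall x, 0 <= x <= gammaS gamma setT -> 0 <= g x) ->
  g 0 = 0 -> g (gammaS gamma setT) = 0 ->
  let Ge := gammaS gamma setT in
  let w := fun S : {set e} => g (gammaS gamma S) in
  (* (i) *)
  (graph_reducible w /\
   exists a : R -> R,
     (forall q, q \in Qa gamma -> 0 <= a q) /\
     (forall S : {set e},
        w S = \sum_(q <- Qa gamma)
                a q * Num.min ((Ge - q) * gammaS gamma S) (q * gammaS gamma (~: S))) /\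
     is_gadget_split (@inl e _)
       (asym_union_W gamma [seq (a q * (Ge - q), a q * q) | q <- Qa gamma]) w)
  /\
  (* (ii) *)
  ((forall x, 0 <= x <= Ge -> g x = g (Ge - x)) ->
   exists a : R -> R,
     (forall q, q \in Qs gamma -> 0 <= a q) /\
     (forall S : {set e},
        w S = \sum_(q <- Qs gamma)
                a q * Num.min (Num.min (gammaS gamma S) (gammaS gamma (~: S))) q) /\
     is_gadget_split (@inl e _)
       (sym_union_W gamma [seq (a q, q) | q <- Qs gamma]) w).
Proof.
move=> H2 Hg Hc Hgn g0 gGe Ge w.
have gam0 : forall A, 0 <= gammaS gamma A by move=> A; apply: sumr_ge0 => v _; exact: ltW.
have gamgt0 : forall A : {set e}, A != set0 -> 0 < gammaS gamma A.
  move=> A /set0Pn [x xA]; rewrite /gammaS (bigD1 x) //=.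
  have := Hg x; have : 0 <= \sum_(i in A | i != x) gamma i by apply: sumr_ge0 => v _; exact: ltW.
  lra.
have GeC : forall A, gammaS gamma (~: A) = Ge - gammaS gamma A by move=> A; exact: gammaSC.
have Gegt0 : 0 < Ge.
  apply: gamgt0; case/card_gt0P: (ltnW H2) => x _; apply/set0Pn; exists x; by rewrite inE.
have Cne : forall A : {set e}, A != setT -> ~: A != set0.
  move=> A; apply: contra => /eqP H; by rewrite -[A]setCK H setC0.
have memQa : forall q, q \in Qa gamma -> 0 < q < Ge.
  move=> q; rewrite mem_undup => /mapP [A]; rewrite mem_filter => /andP[/andP[A0 AT] _] ->.
  rewrite gamgt0 //=; have := gamgt0 _ (Cne _ AT); rewrite GeC; lra.
have inQa : forall A, A != set0 -> A != setT -> gammaS gamma A \in Qa gamma.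
  move=> A A0 AT; rewrite /Qa /Qs mem_undup; apply: map_f; by rewrite mem_filter A0 AT mem_enum inE.
have memQs : forall q, q \in Qs gamma -> 0 < q <= Ge / 2.
  by move=> q; rewrite mem_undup => /mapP [A]; rewrite mem_filter => /andP[/andP[A0 AT] _] ->; rewrite A0.
have inQs : forall A, 0 < gammaS gamma A -> gammaS gamma A <= Ge / 2 -> gammaS gamma A \in Qs gamma.
  move=> A A0 AT; rewrite /Qa /Qs mem_undup; apply: map_f; by rewrite mem_filter A0 AT mem_enum inE.
split.
  pose la := sort <=%R (Qa gamma).
  have la_path : path <%R 0 la.
    apply: sorted_path0; first by rewrite sort_lt_sorted undup_uniq.
    by move=> q; rewrite mem_sort => /memQa /andP[].
  pose sigA b := slope g b Ge.
  pose a q := mkA g sigA 0 la q / Ge.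
  have a_ge0 : forall q, q \in Qa gamma -> 0 <= a q.
    move=> q qQ; apply: divr_ge0; last exact: ltW.
    apply: (@mkA_ge0 _ g sigA (fun x => (0 <= x) && (x < Ge)) 0 la) => //.
    - rewrite /= lexx Gegt0; apply/allP => x; rewrite mem_sort => /memQa /andP[x0 xG].
      by rewrite ltW.
    - move=> u v x /andP[u0 _] _ /andP[_ x1] uv vx.
      by apply: (conc_slope Hc) => //; apply: ltW.
    - move=> u v /andP[u0 _] /andP[_ v1] uv.
      by apply: (conc_slope Hc).
    - by rewrite mem_sort.
  pose L := last 0 la.
  have L0 : L \in 0 :: la by exact: mem_last.
  have LGe : L < Ge.
    move: L0; rewrite inE => /orP[/eqP ->//|]; by rewrite mem_sort => /memQa /andP[].
  have sumq : \sum_(q <- la) mkA g sigA 0 la q * q = - sigA L * Ge.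
    have := interp g sigA la_path L0.
    rewrite (eq_big_seq (fun q => mkA g sigA 0 la q * q)); last first.
      by move=> q ql; rewrite subr0 min_r // (path_le_last la_path) // inE ql orbT.
    move=> ->; rewrite -/L /sigA /slope gGe g0.
    have : Ge - L != 0 by rewrite subr_eq0 gt_eqF.
    by move=> nz; field.
  have ident : forall S, w S = \sum_(q <- Qa gamma)
        a q * Num.min ((Ge - q) * gammaS gamma S) (q * gammaS gamma (~: S)).
    move=> S; rewrite /w GeC -(perm_big _ (_ : perm_eq la (Qa gamma))); last by rewrite /la perm_sort perm_refl.
    set x := gammaS gamma S.
    have x0 : 0 <= x by apply: gam0.
    have xG : x <= Ge by rewrite /x -subr_ge0 -GeC.
    have Hmin : forall q, q \in la -> Num.min ((Ge - q) * x) (q * (Ge - x)) = Ge * Num.min x q - q * x.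
      move=> q; rewrite mem_sort => /memQa /andP[q0 qG].
      case: (leP x q) => h.
        rewrite min_l; first ring.
        nra.
      rewrite min_r; first ring.
      nra.
    rewrite (eq_big_seq (fun q => mkA g sigA 0 la q * (Num.min x q - 0) - x / Ge * (mkA g sigA 0 la q * q)));
      last first.
      move=> q ql; rewrite Hmin // /a subr0.
      have : Ge != 0 by rewrite gt_eqF.
      by move=> nz; field.
    rewrite big_split /= sumrN -mulr_sumr sumq.
    case: (boolP (S == setT)) => [/eqP ST|SnT].
      have xe : x = Ge by rewrite /x ST.
      rewrite (eq_big_seq (fun q => mkA g sigA 0 la q * q)); last first.
        move=> q ql; rewrite xe subr0 min_r //.
        by move: ql; rewrite mem_sort => /memQa /andP[_ /ltW].
      rewrite sumq xe gGe.
      have : Ge != 0 by rewrite gt_eqF.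
      by move=> nz; field.
    have xin : x \in 0 :: la.
      case: (boolP (S == set0)) => [/eqP S0 |S0]; first by rewrite /x S0 /gammaS big_set0 inE eqxx.
      by rewrite inE mem_sort inQa ?orbT.
    rewrite (interp g sigA la_path xin) g0 -/L.
    have : Ge != 0 by rewrite gt_eqF.
    by move=> nz; field.
  set pA := [seq (a q * (Ge - q), a q * q) | q <- Qa gamma].
  split.
    exists (e + 'I_(size pA))%type, inl, (asym_union_W gamma pA).
    split; first by move=> x y [].
    split; last first.
      apply: asym_gadget => S; rewrite ident big_map; apply: eq_big_seq => q qQ /=.
      by rewrite -mulrA -[a q * q * _]mulrA minr_pMr // a_ge0.
    have Hn : forall i : 'I_(size pA),
        0 <= (nth (0,0) pA i).1 /\ 0 <= (nth (0,0) pA i).2.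
      move=> i; have := mem_nth (0,0) (ltn_ord i) => /mapP [q qQ ->] /=.
      have := memQa _ qQ; have := a_ge0 _ qQ => h /andP[h1 h2].
      by split; apply: mulr_ge0 => //; rewrite ?subr_ge0 ltW.
    move=> [u|i] [v|j] //=; apply: mulr_ge0; rewrite ?(ltW (Hg _)) //; [exact: (Hn j).1|exact: (Hn i).2].
  exists a; split => //; split => //.
  apply: asym_gadget => S; rewrite ident big_map; apply: eq_big_seq => q qQ /=.
  by rewrite -mulrA -[a q * q * _]mulrA minr_pMr // a_ge0.
move=> Hsym.
pose ls := sort <=%R (Qs gamma).
have ls_path : path <%R 0 ls.
  apply: sorted_path0; first by rewrite sort_lt_sorted undup_uniq.
  by move=> q; rewrite mem_sort => /memQs /andP[].
pose a q := mkA g (fun _ => 0) 0 ls q.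
have a_ge0 : forall q, q \in Qs gamma -> 0 <= a q.
  move=> q qQ.
  apply: (@mkA_ge0 _ g (fun _ => 0) (fun x => (0 <= x) && (x <= Ge / 2)) 0 ls) => //.
  - rewrite /= lexx divr_ge0 ?(ltW Gegt0) //; apply/allP => x; rewrite mem_sort => /memQs /andP[x0 xG].
    by rewrite ltW.
  - move=> u v x /andP[u0 _] _ /andP[_ x1] uv vx.
    apply: (conc_slope Hc) => //; rewrite -/Ge; have := Gegt0; lra.
  - move=> u v /andP[u0 _] /andP[_ v1] uv.
    have h := conc_slope Hc u0 uv (_ : v < Ge - u) (_ : Ge - u <= Ge).
    have h' := h ltac:(lra) ltac:(lra).
    move: h'; rewrite /slope -Hsym; last lra.
    have vu : 0 < v - u by rewrite subr_gt0.
    have wv : 0 < Ge - u - v by lra.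
    rewrite ler_pdivrMr // mulrAC ler_pdivlMr // => h2.
    rewrite divr_ge0 //; last exact: ltW.
    nra.
  - by rewrite mem_sort.
exists a; split => //.
have ident : forall S, w S = \sum_(q <- Qs gamma)
        a q * Num.min (Num.min (gammaS gamma S) (gammaS gamma (~: S))) q.
  move=> S; rewrite /w -(perm_big _ (_ : perm_eq ls (Qs gamma))); last by rewrite /ls perm_sort perm_refl.
  set x := Num.min (gammaS gamma S) (gammaS gamma (~: S)).
  have gx : g (gammaS gamma S) = g x.
    rewrite /x GeC; case: leP => // h.
    rewrite Hsym; first by congr g; ring.
    by rewrite gam0 /= -subr_ge0 -GeC gam0.
  have xin : x \in 0 :: ls.
    rewrite /x; case: leP => h.
      have : gammaS gamma S <= Ge / 2 by move: h; rewrite GeC; lra.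
      move=> hS; have := gam0 S; rewrite le0r => /orP[/eqP ->|hp]; first by rewrite inE eqxx.
      by rewrite inE mem_sort inQs ?orbT.
    have : gammaS gamma (~: S) <= Ge / 2 by move: h; rewrite GeC; lra.
    move=> hS; have := gam0 (~: S); rewrite le0r => /orP[/eqP ->|hp]; first by rewrite inE eqxx.
    by rewrite inE mem_sort inQs ?orbT.
  have := interp g (fun _ => 0) ls_path xin; rewrite g0 mulr0 !subr0 gx => <-.
  by apply: eq_bigr => q _; rewrite subr0.
split => //.
apply: sym_gadget.
- by move=> z /mapP [q qQ ->] /=; apply: a_ge0.
- by move=> v; apply: ltW.
- move=> S; rewrite ident big_map; apply: eq_big_seq => q qQ /=.
  by rewrite -!minr_pMr // a_ge0.
Qed.
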